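(* Let $\Phi\subset\mathrm{PGL}(n,\mathbb{R})$ be a one-parameter subgroup and let $U\subset\mathbb{RP}^{n-1}$ be a non-empty open set such that the orbit under $\Phi$ of each point of $U$ is a proper subset of a projective line. Then $\Phi$ is a linear flow.
   Context: A linear flow is an injective homomorphism $\Phi:\mathbb{R}\to\mathrm{PGL}(n,\mathbb{R})$ such that the orbit of every point of $\mathbb{RP}^{n-1}$ is a proper subset of a projective line. *)

(* Defs.v *)
From HB Require Import structures.
From mathcomp Require Import all_boot all_order all_algebra.
From mathcomp Require Import all_classical all_reals all_analysis.
Set Implicit Arguments. Unset Strict Implicit. Unset Printing Implicit Defensive.
Import Order.TTheory GRing.Theory Num.Theory.
Import numFieldNormedType.Exports.
Local Open Scope ring_scope.
Local Open Scope classical_set_scope.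

(* Conventions: points of RP^{n-1} are represented by nonzero row vectors
   v : 'rV[R]_n (the point [v]); a matrix g acts by [v] |-> [v *m g].
   A projective line is the projectivization of a 2-dimensional subspace,
   represented by the row space of a matrix L with \rank L = 2. *)

(* A one-parameter subgroup of PGL(n,R), given by a continuous lift
   phi : R -> GL(n,R) which is a group homomorphism; the subgroup of PGL
   is the image of t |-> [phi t]. *)
Definition one_param_lift (R : realType) (n : nat) (phi : R -> 'M[R]_n) : Prop :=
  continuous (phi : R -> 'M[R]_(n, n)) /\ phi 0 = 1%:M /\
  (forall s t, phi (s + t) = phi s *m phi t) /\
  (forall t, phi t \in unitmx).

(* [g] is the identity of PGL(n,R) *)
Definition proj_trivial (R : realType) (n : nat) (g : 'M[R]_n) : Prop :=
  exists c : R, g = c%:M.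

Definition proj_injective (R : realType) (n : nat) (phi : R -> 'M[R]_n) : Prop :=
  forall t, proj_trivial (phi t) -> t = 0.

Definition orbit_in_proper_line (R : realType) (n : nat)
    (phi : R -> 'M[R]_n) (v : 'rV[R]_n) : Prop :=
  exists L : 'M[R]_n, \rank L = 2%N /\
    (forall t, (v *m phi t <= L)%MS) /\
    (exists w : 'rV[R]_n, w != 0 /\ (w <= L)%MS /\
       forall t (c : R), v *m phi t != c *: w).

Definition linear_flow (R : realType) (n : nat) (phi : R -> 'M[R]_n) : Prop :=
  proj_injective phi /\ forall v : 'rV[R]_n, v != 0 -> orbit_in_proper_line phi v.

(* Open subsets of RP^{n-1} correspond to open subsets of R^n \ {0}
   invariant under nonzero scaling. *)
Definition projsp_open (R : realType) (n : nat) (U : set 'rV[R]_n) : Prop :=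
  open U /\ (forall v, U v -> v != 0) /\
  (forall v (c : R), U v -> c != 0 -> U (c *: v)).

(* Main.v *)
Require Import Defs.
From HB Require Import structures.
From mathcomp Require Import all_boot all_order all_algebra.
From mathcomp Require Import all_classical all_reals all_analysis.
From mathcomp Require Import ring lra.
Import Order.TTheory GRing.Theory Num.Theory.
Import numFieldNormedType.Exports.
Local Open Scope ring_scope.
Local Open Scope classical_set_scope.
Set Implicit Arguments. Unset Strict Implicit. Unset Printing Implicit Defensive.
Record char2 (R : realType) (p q t1 : R) (al be : R -> R) : Prop := Char2 {
  c2_ca : continuous al; c2_cb : continuous be;
  c2_a0 : al 0 = 1; c2_b0 : be 0 = 0;
  c2_a1 : al t1 = 0; c2_b1 : be t1 = 1;
  c2_addA : forall s t, al (s + t) = al s * al t + q * (be s * be t);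
  c2_addB : forall s t, be (s + t) = al s * be t + be s * al t + p * (be s * be t) }.

Lemma char2_nz (R : realType) (p q t1 : R) (al be : R -> R) :
  char2 p q t1 al be -> forall t, ~ (al t = 0 /\ be t = 0).
Proof.
move=> [_ _ a0 _ _ _ aD _] t [h1 h2].
by have := aD t (- t); rewrite subrr a0 h1 h2 !mul0r mulr0 addr0 => /eqP; rewrite oner_eq0.
Qed.

Lemma char2_fmul (R : realType) (p q t1 : R) (al be : R -> R) (r : R) :
  char2 p q t1 al be -> r ^+ 2 = p * r + q ->
  forall s t, al (s + t) + r * be (s + t) = (al s + r * be s) * (al t + r * be t).
Proof.
move=> [_ _ _ _ _ _ aD bD] hr s t; rewrite aD bD.
have -> : (al s + r * be s) * (al t + r * be t) =
  al s * al t + q * (be s * be t) + r * (al s * be t + be s * al t + p * (be s * be t))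
  + be s * be t * (r ^+ 2 - p * r - q) by ring.
by rewrite hr; ring.
Qed.

Lemma char2_fpos (R : realType) (p q t1 : R) (al be : R -> R) (r : R) :
  char2 p q t1 al be -> r ^+ 2 = p * r + q ->
  forall t, 0 < al t + r * be t.
Proof.
move=> H hr t; have fm := char2_fmul H hr.
have f0 : al 0 + r * be 0 = 1 by rewrite (c2_a0 H) (c2_b0 H) mulr0 addr0.
have nz : al t + r * be t != 0.
  apply/eqP => h; have := fm t (- t); rewrite subrr f0 h mul0r.
  by move/eqP; rewrite oner_eq0.
have ge : 0 <= al t + r * be t.
  rewrite (splitr t).
  by rewrite fm -expr2 sqr_ge0.
by rewrite lt_neqAle eq_sym nz ge.
Qed.
Lemma addf0 (R : realType) (g : R -> R) :
  (forall s t, g (s + t) = g s + g t) -> g 0 = 0.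
Proof. by move=> gD; have := gD 0 0; rewrite addr0; lra. Qed.

Lemma addf_nat (R : realType) (g : R -> R) :
  (forall s t, g (s + t) = g s + g t) ->
  forall (k : nat) x, g (k%:R * x) = k%:R * g x.
Proof.
move=> gD; elim=> [|k IH] x; first by rewrite !mul0r addf0.
by rewrite -addn1 natrD !mulrDl !mul1r gD IH.
Qed.

Lemma addf_N (R : realType) (g : R -> R) :
  (forall s t, g (s + t) = g s + g t) -> forall x, g (- x) = - g x.
Proof.
move=> gD x; have := gD x (- x); rewrite subrr addf0 //; lra.
Qed.

Lemma addf_int (R : realType) (g : R -> R) :
  (forall s t, g (s + t) = g s + g t) ->
  forall (z : int) x, g (z%:~R * x) = z%:~R * g x.
Proof.
move=> gD [k|k] x.
  by rewrite -!pmulrn addf_nat.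
by rewrite NegzE !mulrNz !mulNr addf_N // -!pmulrn addf_nat.
Qed.

Lemma additive_period0 (R : realType) (g : R -> R) (t0 : R) :
  continuous g -> (forall s t, g (s + t) = g s + g t) ->
  g t0 = 0 -> t0 != 0 -> forall t, g t = 0.
Proof.
move=> cg gD gt0 t0n0.
have [T T0 gT] : exists2 T : R, 0 < T & g T = 0.
  case: (ltgtP t0 0) => h; last by move: t0n0; rewrite h eqxx.
    by exists (- t0); [rewrite oppr_gt0 | rewrite addf_N // gt0 oppr0].
  by exists t0.
have cgw : {within `[0, T], continuous g} by apply: continuous_subspaceT.
have [c1 _ Hc1] := EVT_max (ltW T0) cgw.
have [c2 _ Hc2] := EVT_min (ltW T0) cgw.
pose M := `|g c1| + `|g c2|.
have bnd : forall t, `|g t| <= M.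
  move=> t; pose z := Num.floor (t / T).
  have /andP [z1 z2] := floor_itv (t / T).
  have -> : t = (t - z%:~R * T) + z%:~R * T by rewrite subrK.
  rewrite (gD (t - _)) (@addf_int _ g gD z T) gT mulr0 addr0.

  have e1 : z%:~R * T <= t by rewrite -ler_pdivlMr.
  have e2 : t < z%:~R * T + T.
    by move: z2; rewrite rmorphD /= ltr_pdivrMr // mulrDl mul1r.
  have hs : (t - z%:~R * T \in `[0, T]%R).
    rewrite in_itv /=; apply/andP; split; lra.
  have := Hc1 _ hs; have := Hc2 _ hs.
  move=> h2 h1.
  have n1 := ler_norm (g c1); have n2 := ler_norm (- g c2); rewrite normrN in n2.
  have n3 := normr_ge0 (g c1); have n4 := normr_ge0 (g c2).
  rewrite /M ler_norml; apply/andP; split; lra.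
move=> t; apply/eqP; apply/negP => /negP gtn0.
have gtp : 0 < `|g t| by rewrite normr_gt0.
have M0 : 0 <= M / `|g t| by rewrite divr_ge0 // addr_ge0.
have := archi_boundP M0; set k := Num.Def.archi_bound _ => hk.
have := bnd (k%:R * t); rewrite addf_nat // normrM ger0_norm ?ler0n //.
rewrite -ler_pdivlMr // => h; have := lt_le_trans hk h; by rewrite ltxx.
Qed.
Lemma contD (R : realType) (f g : R -> R) :
  continuous f -> continuous g -> continuous (fun t => f t + g t).
Proof. by move=> cf cg x; apply: cvgD; [exact: cf | exact: cg]. Qed.
Lemma contM (R : realType) (f g : R -> R) :
  continuous f -> continuous g -> continuous (fun t => f t * g t).
Proof. by move=> cf cg x; apply: cvgM; [exact: cf | exact: cg]. Qed.
Lemma contC (R : realType) (c : R) : continuous (fun _ : R => c).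
Proof. exact: cst_continuous. Qed.
Lemma contN (R : realType) (f : R -> R) :
  continuous f -> continuous (fun t => - f t).
Proof. by move=> cf x; apply: cvgN; exact: cf. Qed.
Lemma contB (R : realType) (f g : R -> R) :
  continuous f -> continuous g -> continuous (fun t => f t - g t).
Proof. by move=> cf cg; apply: contD => //; apply: contN. Qed.
Lemma contlin (R : realType) (f g : R -> R) a b :
  continuous f -> continuous g -> continuous (fun t => a * f t + b * g t).
Proof. by move=> cf cg; apply: contD; apply: contM => //; apply: contC. Qed.

Lemma ivt0 (R : realType) (f : R -> R) a b :
  continuous f -> f a * f b <= 0 -> exists c, f c = 0.
Proof.
move=> cf.
wlog ab : a b / a <= b.
  move=> W h; case: (lerP a b) => hab; first exact: W h.
  by apply: (W b a); [exact: ltW | rewrite mulrC].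
move=> h.
have cfw : {within `[a, b], continuous f} by apply: continuous_subspaceT.
have hm : Num.min (f a) (f b) <= 0 <= Num.max (f a) (f b).
  rewrite ge_min le_max.
  have [ha|ha] := lerP (f a) 0.
    rewrite /=; have [hb|hb] := lerP 0 (f b); first by rewrite orbT.
    by apply/orP; left; nra.
  have hb : f b <= 0 by nra.
  by rewrite hb /= (ltW ha).
have [c _ fc] := IVT ab cfw hm.
by exists c.
Qed.
Lemma contV (R : realType) (f : R -> R) :
  continuous f -> (forall t, f t != 0) -> continuous (fun t => (f t)^-1).
Proof. by move=> cf nz x; apply: continuousV => //; exact: cf. Qed.

Lemma contln (R : realType) (f : R -> R) :
  continuous f -> (forall t, 0 < f t) -> continuous (fun t => ln (f t)).
Proof.
move=> cf pf x; exact: (continuous_comp (cf x) (continuous_ln (pf x))).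
Qed.

Lemma char2_ii (R : realType) (p q t1 : R) (al be : R -> R) :
  char2 p q t1 al be -> 0 <= p ^+ 2 + 4 * q ->
  (forall t, 0 < 2 * al t + p * be t) /\ (forall t, be t = 0 -> t = 0).
Proof.
move=> H hd.
have [ca cb a0 b0 a1 b1 aD bD] := H.
set sq := Num.sqrt (p ^+ 2 + 4 * q).
have hsq : sq ^+ 2 = p ^+ 2 + 4 * q by rewrite sqr_sqrtr.
pose r1 := (p + sq) / 2; pose r2 := (p - sq) / 2.
have hr1 : r1 ^+ 2 = p * r1 + q.
  apply/eqP; rewrite -subr_eq0.
  have -> : r1 ^+ 2 - (p * r1 + q) = (sq ^+ 2 - (p ^+ 2 + 4 * q)) / 4 by rewrite /r1; field.
  by rewrite hsq subrr mul0r.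
have hr2 : r2 ^+ 2 = p * r2 + q.
  apply/eqP; rewrite -subr_eq0.
  have -> : r2 ^+ 2 - (p * r2 + q) = (sq ^+ 2 - (p ^+ 2 + 4 * q)) / 4 by rewrite /r2; field.
  by rewrite hsq subrr mul0r.
have f1p := char2_fpos H hr1; have f2p := char2_fpos H hr2.
have f1m := char2_fmul H hr1; have f2m := char2_fmul H hr2.
split.
  move=> t; have -> : 2 * al t + p * be t = (al t + r1 * be t) + (al t + r2 * be t).
    by rewrite /r1 /r2; field.
  by rewrite addr_gt0.
move=> t0 bt0; apply/eqP; apply/negP => /negP t0n0.
have cf1 : continuous (fun t => al t + r1 * be t).
  by have := @contlin _ al be 1 r1 ca cb; under eq_fun do rewrite mul1r.
have cf2 : continuous (fun t => al t + r2 * be t).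
  by have := @contlin _ al be 1 r2 ca cb; under eq_fun do rewrite mul1r.
have [sq0|sqn0] := eqVneq sq 0.
  have er : r2 = r1 by rewrite /r1 /r2 sq0 subr0 addr0.
  have hp : p = 2 * r1 by rewrite /r1 sq0 addr0; field.
  pose g t := be t / (al t + r1 * be t).
  have gD : forall s t, g (s + t) = g s + g t.
    move=> s t; rewrite /g f1m bD.
    have n1 := f1p s; have n2 := f1p t.
    rewrite hp; field.
    by rewrite !gt_eqF.
  have cg : continuous g.
    apply: contM => //; apply: contV => // t; by rewrite gt_eqF.
  have gt0 : g t0 = 0 by rewrite /g bt0 mul0r.
  have := @additive_period0 _ g t0 cg gD gt0 t0n0 t1.
  rewrite /g b1 a1 mul1r mulr1 add0r => /eqP.
  have r1p : 0 < r1 by have := f1p t1; rewrite a1 b1 mulr1 add0r.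
  by rewrite invr_eq0 gt_eqF.
pose g t := ln (al t + r1 * be t) - ln (al t + r2 * be t).
have gD : forall s t, g (s + t) = g s + g t.
  move=> s t; rewrite /g f1m f2m !lnM ?posrE //; ring.
have cg : continuous g by apply: contB; apply: contln.
have gt0 : g t0 = 0 by rewrite /g bt0 !mulr0 subrr.
have := @additive_period0 _ g t0 cg gD gt0 t0n0 t1.
rewrite /g => /eqP; rewrite subr_eq0 => /eqP.
move/ln_inj; rewrite !posrE => /(_ (f1p _) (f2p _)).
rewrite a1 b1 !mulr1 !add0r /r1 /r2 => /eqP.
rewrite -subr_eq0 -mulrBl; rewrite mulf_eq0 invr_eq0 pnatr_eq0 orbF.
have -> : p + sq - (p - sq) = 2 * sq by ring.
by rewrite mulf_eq0 pnatr_eq0 (negPf sqn0).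
Qed.
Lemma char2_i (R : realType) (p q t1 : R) (al be : R -> R) :
  char2 p q t1 al be -> p ^+ 2 + 4 * q < 0 ->
  forall a b, exists t, al t * b - be t * a = 0.
Proof.
move=> H hd.
have [ca cb a0 b0 a1 b1 aD bD] := H.
have nz := char2_nz H.
pose D := - (p ^+ 2 + 4 * q).
have D0 : 0 < D by rewrite /D oppr_gt0.
pose w := Num.sqrt D / 2.
have w0 : 0 < w by rewrite /w divr_gt0 // sqrtr_gt0.
have w2 : w ^+ 2 = D / 4.
  by rewrite /w expr_div_n sqr_sqrtr ?ltW //; congr (_ / _); rewrite -natrX.
pose mu := p / 2.
pose Rf t := al t + mu * be t.
pose If t := w * be t.
pose N t := Rf t ^+ 2 + If t ^+ 2.
have dR : forall t, Rf (t + t) = Rf t ^+ 2 - If t ^+ 2.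
  move=> t; rewrite /Rf /If aD bD exprMn w2 /D /mu; field => //.
have dI : forall t, If (t + t) = 2 * Rf t * If t.
  move=> t; rewrite /Rf /If bD /mu; field => //.
have Npos : forall t, 0 < N t.
  move=> t; rewrite lt_neqAle addr_ge0 ?sqr_ge0 // andbT eq_sym.
  rewrite paddr_eq0 ?sqr_ge0 // !sqrf_eq0; apply/negP => /andP [/eqP h1 /eqP h2].
  have hb : be t = 0 by move: h2; rewrite /If => /eqP; rewrite mulf_eq0 gt_eqF //= => /eqP.
  apply: (nz t); split => //; move: h1; by rewrite /Rf hb mulr0 addr0.
have [T RT] : exists T, Rf T <= 0.
  apply/not_existsP => hpos.
  have {}hpos : forall t, 0 < Rf t by move=> t; rewrite ltNge; apply/negP => h; apply: (hpos t).
  pose c t := Rf t / Num.sqrt (N t).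
  have sN : forall t, 0 < Num.sqrt (N t) by move=> t; rewrite sqrtr_gt0.
  have cpos : forall t, 0 < c t by move=> t; rewrite divr_gt0.
  have csq : forall t, c t ^+ 2 = Rf t ^+ 2 / N t.
    by move=> t; rewrite /c expr_div_n sqr_sqrtr // ltW.
  have cle1 : forall t, c t <= 1.
    move=> t; have : c t ^+ 2 <= 1.
      rewrite csq ler_pdivrMr // mul1r /N lerDl sqr_ge0 //.
    have := cpos t; nra.
  have c2 : forall t, c (t + t) = 2 * c t ^+ 2 - 1.
    move=> t; have NN : N (t + t) = N t ^+ 2 by rewrite /N dR dI; ring.
    rewrite csq /c NN sqrtr_sqr ger0_norm ?ltW // dR.
    have := Npos t; rewrite /N => hN; field; by rewrite gt_eqF.
  have x0 : c t1 < 1.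
    have : c t1 ^+ 2 < 1.
      rewrite csq ltr_pdivrMr // mul1r /N ltrDl /If b1 mulr1 exprn_gt0 //.
    have := cpos t1; nra.
  pose x k := c ((2 ^ k)%:R * t1).
  have xS : forall k, x k.+1 = 2 * x k ^+ 2 - 1.
    by move=> k; rewrite /x -c2 expnS natrM; congr c; ring.
  have xb : forall k, (2 ^ k)%:R * (1 - c t1) <= 1 - x k.
    elim=> [|k IH]; first by rewrite /x expn0 !mul1r.
    rewrite xS expnS natrM.
    have := cpos ((2 ^ k)%:R * t1); have := cle1 ((2 ^ k)%:R * t1).
    rewrite -/(x k) => h1 h2; nra.
  have d0 : 0 < 1 - c t1 by rewrite subr_gt0.
  have di : 0 <= (1 - c t1)^-1 by rewrite invr_ge0 ltW.
  have := @archi_boundP _ (1 - c t1)^-1 di.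
  set k := Num.Def.archi_bound _ => hk.
  have hk2 : (k%:R : R) <= (2 ^ k)%:R by rewrite ler_nat ltnW // ltn_expl.
  have := xb k; have := cpos ((2 ^ k)%:R * t1); rewrite -/(x k) => h1 h2.
  have : (1 - c t1)^-1 * (1 - c t1) < (2 ^ k)%:R * (1 - c t1).
    by rewrite ltr_pM2r //; apply: lt_le_trans hk2.
  rewrite mulVf ?gt_eqF //; lra.
have cR : continuous Rf.
  by have := @contlin _ al be 1 mu ca cb; under eq_fun do rewrite mul1r.
have [s Rs] : exists s, Rf s = 0.
  apply: (@ivt0 _ Rf 0 T cR).
  by rewrite /Rf a0 b0 mulr0 addr0 mul1r.
have bss : be (s + s) = 0.
  have := dI s; rewrite Rs mulr0 mul0r /If => /eqP; rewrite mulf_eq0 gt_eqF //=.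
  by move/eqP.
have ass : al (s + s) < 0.
  have := dR s; rewrite Rs expr0n /= sub0r /Rf bss mulr0 addr0 => ->.
  rewrite oppr_lt0; have := Npos s; rewrite /N Rs expr0n /= add0r //.
move=> a b.
have cF : continuous (fun t => al t * b - be t * a).
  by apply: contB; apply: contM => //; apply: contC.
apply: (@ivt0 _ _ 0 (s + s) cF).
rewrite a0 b0 bss !mul0r !subr0 mul1r.
rewrite mulrCA -expr2.
have := sqr_ge0 b; nra.
Qed.
Lemma rank_limit (R : realType) k n (X0 X1 : 'M[R]_(k, n)) (K : R) :
  (forall r, K < r -> (\rank (X1 + r *: X0)%R < k)%N) -> (\rank X1 < k)%N.
Proof.
move=> H; rewrite ltn_neqAle rank_leq_row andbT; apply/negP => /eqP rk.
have rf : row_full X1^T by rewrite /row_full mxrank_tr rk.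
pose f := fullrankfun rf.
pose P : 'M[{poly R}]_(n, k) := map_mx polyC X1^T + 'X *: map_mx polyC X0^T.
pose Q := \det (rowsub f P).
have QE : forall r, Q.[r] = \det (rowsub f (X1 + r *: X0)%R^T).
  move=> r; rewrite /Q -horner_evalE -det_map_mx; congr (\det _).
  apply/matrixP => i j; rewrite !mxE /= horner_evalE.
  by rewrite hornerD hornerM hornerX !hornerC.
have Q0 : Q = 0.
  apply: (@roots_geq_poly_eq0 _ _ [seq K + (i.+1)%:R | i <- iota 0 (size Q)]).
  - apply/allP => r /mapP [i _ ->]; rewrite /root QE; apply/eqP.
    have Kr : K < K + (i.+1)%:R by rewrite ltrDl ltr0Sn.
    apply/eqP; rewrite -[_ == 0]negbK -unitfE -unitmxE; apply/negP => /mxrank_unit rkk.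
    have h1 := mxrankS (rowsub_sub f (X1 + (K + (i.+1)%:R) *: X0)^T).
    rewrite mxrank_tr rkk in h1; have := H _ Kr; by rewrite ltnNge h1.
  - rewrite map_inj_uniq ?iota_uniq // => a b /addrI /eqP; rewrite eqr_nat eqSS.
    by move/eqP.
  - by rewrite size_map size_iota.
have := QE 0; rewrite Q0 horner0 scale0r addr0 => /esym /eqP.
apply/negP; rewrite -unitfE -unitmxE; exact: fullrowsub_unit.
Qed.
Definition indep2 (R : realType) n (u w : 'rV[R]_n) :=
  forall x y : R, x *: u + y *: w = 0 -> x = 0 /\ y = 0.

Lemma indep2_neq0 (R : realType) n (u w : 'rV[R]_n) : indep2 u w -> u != 0 /\ w != 0.
Proof.
move=> H; split; apply/eqP => h.
  by have [] := H 1 0; rewrite ?h ?scaler0 ?scale0r ?addr0 // => /eqP; rewrite oner_eq0.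
by have [] := H 0 1; rewrite ?h ?scaler0 ?scale0r ?add0r // => _ /eqP; rewrite oner_eq0.
Qed.

Lemma sub_col2 (R : realType) n (x u w : 'rV[R]_n) :
  (x <= col_mx u w)%MS -> exists a b, x = a *: u + b *: w.
Proof.
case/submxP => D ->; rewrite -[D]hsubmxK mul_row_col.
exists (lsubmx D 0 0), (rsubmx D 0 0).
by rewrite {1}[lsubmx D]mx11_scalar {1}[rsubmx D]mx11_scalar !mul_scalar_mx.
Qed.

Lemma col2_subl (R : realType) n (u w : 'rV[R]_n) : (u <= col_mx u w)%MS.
Proof. by rewrite -addsmxE addsmxSl. Qed.
Lemma col2_subr (R : realType) n (u w : 'rV[R]_n) : (w <= col_mx u w)%MS.
Proof. by rewrite -addsmxE addsmxSr. Qed.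

Lemma lc_sub (R : realType) n (u w : 'rV[R]_n) a b : ((a *: u + b *: w)%R <= col_mx u w)%MS.
Proof. by apply: addmx_sub; apply: scalemx_sub; [apply: col2_subl | apply: col2_subr]. Qed.

Lemma indep2_rank (R : realType) n (u w : 'rV[R]_n) : indep2 u w -> \rank (col_mx u w) = 2%N.
Proof.
move=> H; have [u0 w0] := indep2_neq0 H.
have cap0 : (u :&: w)%MS = 0.
  apply/eqP; rewrite -submx0; apply/row_subP => i.
  have : (row i (u :&: w)%MS <= (u :&: w)%MS)%MS by apply: row_sub.
  rewrite sub_capmx => /andP [/sub_rVP [a ha] /sub_rVP [b hb]].
  have [a0 _] : a = 0 /\ - b = 0 by apply: H; rewrite scaleNr -ha -hb subrr.
  by rewrite ha a0 scale0r sub0mx.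
have := mxrank_disjoint_sum cap0; rewrite !rank_rV u0 w0 /= => h.
by rewrite -(addsmxE u w) h.
Qed.

Lemma span2 (R : realType) n m (u w : 'rV[R]_n) (Z : 'M[R]_(m, n)) :
  indep2 u w -> (u <= Z)%MS -> (w <= Z)%MS -> (\rank Z <= 2)%N ->
  forall x, (x <= Z)%MS -> exists a b, x = a *: u + b *: w.
Proof.
move=> H uZ wZ rZ x xZ.
have YZ : (col_mx u w <= Z)%MS by rewrite col_mx_sub uZ wZ.
have [le e] := mxrank_leqif_sup YZ.
have ZY : (Z <= col_mx u w)%MS.
  rewrite -e indep2_rank // eqn_leq rZ andbT.
  by rewrite -(indep2_rank H) mxrankS.
by apply: sub_col2; apply: submx_trans xZ ZY.
Qed.
Lemma open_line (R : realType) n (U : set 'rV[R]_n) (w0 u : 'rV[R]_n) :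
  open U -> U w0 -> exists2 e : R, 0 < e & forall s : R, `|s| < e -> U (w0 + s *: u).
Proof.
move=> oU Uw0.
have : nbhs w0 U by apply: open_nbhs_nbhs; split.
move=> /nbhs_ballP [e e0 eU].
exists (e / (`|u| + 1)); first by rewrite divr_gt0 // ltr_wpDl.
move=> s hs; apply: eU.
rewrite -ball_normE /ball_ /= opprD addrA subrr add0r normrN normrZ.
have u1 : 0 < `|u| + 1 by rewrite ltr_wpDl.
rewrite ltr_pdivlMr // in hs.
apply: le_lt_trans hs; apply: ler_wpM2l => //; rewrite lerDl ler01.
by [].
Qed.
Definition X3 (R : realType) n (v : 'rV[R]_n) (M1 M2 : 'M[R]_n) : 'M[R]_(1 + (1 + 1), n) :=
  col_mx v (col_mx (v *m M1) (v *m M2)).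

Lemma X3_lin (R : realType) n (a b : 'rV[R]_n) (r : R) M1 M2 :
  X3 (a + r *: b) M1 M2 = X3 a M1 M2 + r *: X3 b M1 M2.
Proof. by rewrite /X3 !mulmxDl -!scalemxAl !scale_col_mx !add_col_mx. Qed.

Lemma step1 (R : realType) n (U : set 'rV[R]_n) (w0 : 'rV[R]_n) (M1 M2 : 'M[R]_n) :
  open U -> U w0 -> (forall w, U w -> (\rank (X3 w M1 M2) < 3)%N) ->
  forall u, (\rank (X3 u M1 M2) < 3)%N.
Proof.
move=> oU Uw0 H u.
have [e e0 He] := open_line u oU Uw0.
apply: (@rank_limit _ _ _ (X3 w0 M1 M2) (X3 u M1 M2) e^-1) => r hr.
have r0 : 0 < r by apply: lt_trans hr; rewrite invr_gt0.
have -> : (X3 u M1 M2 + r *: X3 w0 M1 M2)%R = r *: X3 (w0 + r^-1 *: u) M1 M2.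
  by rewrite X3_lin scalerDr scalerA divff ?gt_eqF // scale1r addrC.
rewrite mxrank_scale_nz ?gt_eqF //; apply: H; apply: He.
by rewrite gtr0_norm ?invr_gt0 // invf_plt ?posrE.
Qed.
Lemma X3_sub (R : realType) n (v : 'rV[R]_n) (M1 M2 : 'M[R]_n) :
  [/\ (v <= X3 v M1 M2)%MS, (v *m M1 <= X3 v M1 M2)%MS & (v *m M2 <= X3 v M1 M2)%MS].
Proof.
rewrite /X3 -!addsmxE; split; first by rewrite addsmxSl.
  by apply: submx_trans (addsmxSr v _); exact: col2_subl.
by apply: submx_trans (addsmxSr v _); exact: col2_subr.
Qed.

Lemma X3_L (R : realType) n (v : 'rV[R]_n) (M1 M2 L : 'M[R]_n) :
  \rank L = 2%N -> (v <= L)%MS -> (v *m M1 <= L)%MS -> (v *m M2 <= L)%MS ->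
  (\rank (X3 v M1 M2) < 3)%N.
Proof.
move=> rL h0 h1 h2; rewrite -[3%N]/(2.+1) ltnS -rL mxrankS //.
by rewrite /X3 !col_mx_sub h0 h1 h2.
Qed.

Lemma span_X3 (R : realType) n (u : 'rV[R]_n) (B M : 'M[R]_n) :
  (\rank (X3 u B M) < 3)%N -> indep2 u (u *m B) ->
  exists a b, u *m M = a *: u + b *: (u *m B).
Proof.
move=> r3 H; have [s0 s1 s2] := X3_sub u B M.
by apply: (span2 H s0 s1 _ s2).
Qed.

Lemma entry_eq (R : realType) n (v w : 'rV[R]_n) : v = w -> forall j, v 0 j = w 0 j.
Proof. by move=> ->. Qed.

Lemma not_all_eigen (R : realType) n (U : set 'rV[R]_n) (w0 : 'rV[R]_n) (B : 'M[R]_n) :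
  open U -> U w0 -> w0 != 0 -> (forall v, U v -> exists l, v *m B = l *: v) ->
  exists c, B = c%:M.
Proof.
move=> oU Uw0 w00 H.
have [l hl] := H _ Uw0.
suff hu : forall u : 'rV[R]_n, u *m B = l *: u.
  exists l; apply/row_matrixP => i.
  by rewrite !rowE hu mul_mx_scalar.
move=> u.
case: (pselect (indep2 u w0)) => Hi; last first.
  move: Hi => /existsNP [x] /existsNP [y] /not_implyP [hxy nxy].
  have x0 : x != 0.
    apply/eqP => x0; apply: nxy; split => //; move: hxy; rewrite x0 scale0r add0r.
    by move/eqP; rewrite scaler_eq0 (negPf w00) orbF => /eqP.
  have -> : u = (- (y / x)) *: w0.
    apply/rowP => j; have := entry_eq hxy j; rewrite !mxE => h.
    apply: (mulfI x0).
    have -> : x * (- (y / x) * w0 0 j) = - (y * w0 0 j) by field.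
    lra.
  by rewrite -scalemxAl hl !scalerA mulrC.
have [e e0 He] := open_line u oU Uw0.
pose s := e / 4.
have s0 : 0 < s by rewrite divr_gt0.
have s1 : `|s| < e by rewrite gtr0_norm // /s ltr_pdivrMr // ltr_pMr // ltr1n.
have s2 : `|s + s| < e by rewrite gtr0_norm ?addr_gt0 // /s; lra.
have [m1 h1] := H _ (He _ s1).
have [m2 h2] := H _ (He _ s2).
rewrite !mulmxDl -!scalemxAl hl in h1 h2.
move: (u *m B) h1 h2 => uB h1 h2.
have [ha hb] : 2%:R * s * (m1 - m2) = 0 /\ 2%:R * m1 - m2 - l = 0.
  apply: Hi; apply/rowP => j.
  have := entry_eq h1 j; have := entry_eq h2 j; rewrite !mxE => e2 e1.
  apply/eqP; rewrite -subr_eq0; apply/eqP.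
  transitivity ((l * w0 0 j + (s + s) * uB 0 j - m2 * (w0 0 j + (s + s) * u 0 j))
    - 2 * (l * w0 0 j + s * uB 0 j - m1 * (w0 0 j + s * u 0 j))); first by ring.
  by rewrite e1 e2 !subrr mulr0 subr0.
have m12 : m1 = m2.
  move: ha => /eqP; rewrite !mulf_eq0 (gt_eqF e0) invr_eq0 !pnatr_eq0 /= subr_eq0.
  by move/eqP.
have ml : m1 = l by lra.
apply/rowP => j; have := entry_eq h1 j; rewrite !mxE ml => e1.
have sn : s != 0 by rewrite gt_eqF.
apply: (mulfI sn); lra.
Qed.
Lemma cont_sum (R : realType) (I : Type) (s : seq I) (F : I -> R -> R) :
  (forall i, continuous (F i)) -> continuous (fun t => \sum_(i <- s) F i t).
Proof.
move=> cF; elim: s => [|i s IH].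
  have -> : (fun t => \sum_(i <- [::]) F i t) = (fun _ => 0).
    by apply: funext => t; rewrite big_nil.
  exact: contC.
have -> : (fun t => \sum_(j <- i :: s) F j t) = (fun t => F i t + \sum_(j <- s) F j t).
  by apply: funext => t; rewrite big_cons.
exact: contD.
Qed.

Lemma cont_orbit_entry (R : realType) n (phi : R -> 'M[R]_n) (u : 'rV[R]_n) j :
  continuous (phi : R -> 'M[R]_(n, n)) -> continuous (fun t => (u *m phi t) 0 j).
Proof.
move=> cphi.
have -> : (fun t => (u *m phi t) 0 j) = (fun t => \sum_k u 0 k * phi t k j).
  by apply: funext => t; rewrite mxE.
apply: (@cont_sum _ _ (index_enum _) (fun k t => u 0 k * phi t k j)) => k.
apply: contM; first exact: contC.
move=> x; exact: (continuous_comp (cphi x) (@coord_continuous _ n n k j (phi x))).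
Qed.

Lemma coords (R : realType) n (u w : 'rV[R]_n) (y : R -> 'rV[R]_n) :
  indep2 u w -> (forall t, exists a b, y t = a *: u + b *: w) ->
  (forall j, continuous (fun t => y t 0 j)) ->
  exists al be : R -> R, [/\ continuous al, continuous be &
    forall t, y t = al t *: u + be t *: w].
Proof.
move=> H hy cy.
have [j1 [j2 d0]] : exists j1 j2, u 0 j1 * w 0 j2 - u 0 j2 * w 0 j1 != 0.
  apply/not_existsP => hn.
  have [u0 _] := indep2_neq0 H.
  have [j1 uj1] : exists j1, u 0 j1 != 0.
    apply/not_existsP => hu.
    have uz : u = 0.
      apply/rowP => j; rewrite mxE; apply/eqP; apply/negP => /negP h; exact: (hu j).
    by rewrite uz eqxx in u0.
  have [] := H (w 0 j1 / u 0 j1) (-1).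
    apply/rowP => j; rewrite !mxE.
    have : u 0 j1 * w 0 j - u 0 j * w 0 j1 = 0.
      apply/eqP; apply/negP => /negP h; exact: (hn j1 (ex_intro _ j h)).
    move=> h; apply: (mulfI uj1).
    have -> : u 0 j1 * (w 0 j1 / u 0 j1 * u 0 j + -1 * w 0 j) =
              - (u 0 j1 * w 0 j - u 0 j * w 0 j1) by field.
    by rewrite h oppr0 mulr0.
  by move=> _ /eqP; rewrite oppr_eq0 oner_eq0.
pose d := u 0 j1 * w 0 j2 - u 0 j2 * w 0 j1.
exists (fun t => (y t 0 j1 * w 0 j2 - y t 0 j2 * w 0 j1) / d).
exists (fun t => (u 0 j1 * y t 0 j2 - u 0 j2 * y t 0 j1) / d).
split.
- apply: contM; last exact: contC.
  by apply: contB; apply: contM => //; apply: contC.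
- apply: contM; last exact: contC.
  by apply: contB; apply: contM => //; apply: contC.
move=> t; have [a [b hab]] := hy t.
have e1 := entry_eq hab j1; have e2 := entry_eq hab j2.
rewrite !mxE in e1 e2.
have -> : (y t 0 j1 * w 0 j2 - y t 0 j2 * w 0 j1) / d = a.
  by rewrite e1 e2 /d; field.
have -> : (u 0 j1 * y t 0 j2 - u 0 j2 * y t 0 j1) / d = b.
  by rewrite e1 e2 /d; field.
exact: hab.
Qed.
Lemma lc_uniq (R : realType) n (u w : 'rV[R]_n) a b c d :
  indep2 u w -> a *: u + b *: w = c *: u + d *: w -> a = c /\ b = d.
Proof.
move=> H h; have [h1 h2] : a - c = 0 /\ b - d = 0.
  apply: H; apply/rowP => j; have := entry_eq h j; rewrite !mxE => e; lra.
by split; apply/eqP; rewrite -subr_eq0; apply/eqP.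
Qed.

Lemma build_char2 (R : realType) n (phi : R -> 'M[R]_n) (u : 'rV[R]_n) (t1 : R) :
  one_param_lift phi -> indep2 u (u *m phi t1) ->
  (forall t, (\rank (X3 u (phi t1) (phi t)) < 3)%N) ->
  exists p q (al be : R -> R), [/\ char2 p q t1 al be,
     forall t, u *m phi t = al t *: u + be t *: (u *m phi t1) &
     u *m phi t1 *m phi t1 = q *: u + p *: (u *m phi t1)].
Proof.
move=> [cphi [phi0 [phiD _]]] H r3.
have ex : forall t, exists a b, u *m phi t = a *: u + b *: (u *m phi t1).
  by move=> t; apply: span_X3.
have [al [be [ca cb hc]]] := coords H ex (fun j => @cont_orbit_entry _ _ phi u j cphi).
set uB := u *m phi t1 in H ex hc *.
pose p := be (t1 + t1); pose q := al (t1 + t1).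
have hBB : uB *m phi t1 = q *: u + p *: uB by rewrite /uB -mulmxA -phiD hc.
have comm : forall t, phi t1 *m phi t = phi t *m phi t1.
  by move=> t; rewrite -!phiD addrC.
have [a0 b0] : al 0 = 1 /\ be 0 = 0.
  apply: (lc_uniq H); rewrite -hc phi0 mulmx1 scale1r scale0r addr0 //.
have [a1 b1] : al t1 = 0 /\ be t1 = 1.
  by apply: (lc_uniq H); rewrite -hc scale1r scale0r add0r.
have hD : forall s t, u *m phi (s + t) =
   (al s * al t + q * (be s * be t)) *: u +
   (al s * be t + be s * al t + p * (be s * be t)) *: uB.
  move=> s t; rewrite phiD mulmxA hc mulmxDl -!scalemxAl.
  have -> : uB *m phi t = al t *: uB + be t *: (q *: u + p *: uB).
    by rewrite /uB -mulmxA comm mulmxA hc mulmxDl -!scalemxAl hBB.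
  rewrite hc; apply/rowP => j; rewrite !mxE; ring.
exists p, q, al, be; split => //.
split => // s t; have := hD s t; rewrite hc => /(lc_uniq H) [] //.
Qed.
Lemma act1 (R : realType) n (u : 'rV[R]_n) (B : 'M[R]_n) p q c d :
  u *m B *m B = q *: u + p *: (u *m B) ->
  (c *: u + d *: (u *m B)) *m B = (d * q) *: u + (c + d * p) *: (u *m B).
Proof.
move=> hu; rewrite mulmxDl -!scalemxAl hu.
apply/rowP => j; rewrite !mxE; ring.
Qed.

Lemma act2 (R : realType) n (u : 'rV[R]_n) (B : 'M[R]_n) p q c d :
  u *m B *m B = q *: u + p *: (u *m B) ->
  (c *: u + d *: (u *m B)) *m B *m B =
    p *: ((c *: u + d *: (u *m B)) *m B) + q *: (c *: u + d *: (u *m B)).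
Proof.
move=> hu; rewrite !(act1 _ _ hu).
apply/rowP => j; rewrite !mxE; ring.
Qed.

Lemma quad_scalar (R : realType) (p q D E A B : R) :
  p ^+ 2 + 4 * q < 0 -> ~ (A = 0 /\ B = 0) ->
  D * (B * q) + E * A = 0 -> D * (A + B * p) + E * B = 0 -> D = 0 /\ E = 0.
Proof.
move=> hd nAB e1 e2.
have N0 : 0 < A ^+ 2 + p * A * B - q * B ^+ 2.
  have [B0|B0] := eqVneq B 0.
    have A0 : A != 0 by apply/eqP => A0; apply: nAB.
    rewrite B0 mulr0 expr0n /= mulr0 subr0 addr0.
    by rewrite lt_neqAle sqr_ge0 andbT eq_sym sqrf_eq0.
  have : 0 < B ^+ 2 by rewrite lt_neqAle sqr_ge0 andbT eq_sym sqrf_eq0.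
  have := sqr_ge0 (2 * A + p * B); nra.
have DN : D * (A ^+ 2 + p * A * B - q * B ^+ 2) = 0.
  transitivity (A * (D * (A + B * p) + E * B) - B * (D * (B * q) + E * A)); first by ring.
  by rewrite e1 e2 !mulr0 subrr.
have D0 : D = 0 by move: DN => /eqP; rewrite mulf_eq0 (gt_eqF N0) orbF => /eqP.
rewrite D0 !mul0r !add0r in e1 e2; split => //.
have [A0|A0] := eqVneq A 0.
  have B0 : B != 0 by apply/eqP => B0; apply: nAB.
  by move: e2 => /eqP; rewrite mulf_eq0 (negPf B0) orbF => /eqP.
by move: e1 => /eqP; rewrite mulf_eq0 (negPf A0) orbF => /eqP.
Qed.

Lemma linking (R : realType) n (u v : 'rV[R]_n) (B : 'M[R]_n) p q p' q' :
  indep2 u (u *m B) -> indep2 v (v *m B) ->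
  u *m B *m B = q *: u + p *: (u *m B) ->
  v *m B *m B = q' *: v + p' *: (v *m B) ->
  p ^+ 2 + 4 * q < 0 ->
  (exists x y z, ~ (x = 0 /\ y = 0 /\ z = 0) /\
     x *: (u + v) + y *: ((u + v) *m B) + z *: ((u + v) *m B *m B) = 0) ->
  p = p' /\ q = q'.
Proof.
move=> Hu Hv hu hv hd [x [y [z [nz he]]]].
rewrite !mulmxDl hu hv in he.
pose A1 := x + z * q; pose B1 := y + z * p.
pose A2 := x + z * q'; pose B2 := y + z * p'.
have hh : A1 *: u + B1 *: (u *m B) = (- A2) *: v + (- B2) *: (v *m B).
  apply/rowP => j; have := entry_eq he j; rewrite !mxE /A1 /B1 /A2 /B2 => e.
  apply/eqP; rewrite -subr_eq0; apply/eqP; apply: etrans e; ring.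
case: (pselect (A1 = 0 /\ B1 = 0)) => [[a1 b1]|nAB].
  have [a2 b2] : - A2 = 0 /\ - B2 = 0.
    apply: Hv; by rewrite -hh a1 b1 !scale0r addr0.
  have z0 : z != 0.
    apply/eqP => z0; apply: nz; move: a1 b1; rewrite /A1 /B1 z0 !mul0r !addr0 => -> ->.
    by [].
  move: a1 b1 a2 b2; rewrite /A1 /B1 /A2 /B2 => a1 b1 a2 b2.
  split; apply: (mulfI z0); lra.
have eu := @act2 _ _ u B p q A1 B1 hu.
have ev := @act2 _ _ v B p' q' (- A2) (- B2) hv.
rewrite -hh in ev; rewrite ev in eu.
rewrite !(act1 _ _ hu) in eu.
have [e1 e2] : (p' - p) * (B1 * q) + (q' - q) * A1 = 0 /\
               (p' - p) * (A1 + B1 * p) + (q' - q) * B1 = 0.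
  have : ((p' - p) * (B1 * q) + (q' - q) * A1) *: u +
         ((p' - p) * (A1 + B1 * p) + (q' - q) * B1) *: (u *m B) = 0 *: u + 0 *: (u *m B).
    apply/rowP => j; have := entry_eq eu j; rewrite !mxE => /eqP; rewrite -subr_eq0 => /eqP e.
    rewrite mul0r mul0r addr0; apply: etrans e; ring.
  by move/(lc_uniq Hu).
have [D0 E0] := quad_scalar hd nAB e1 e2.
by split; apply/eqP; rewrite eq_sym -subr_eq0; apply/eqP.
Qed.
Lemma dep_eigen (R : realType) n (v w : 'rV[R]_n) :
  v != 0 -> ~ indep2 v w -> exists l, w = l *: v.
Proof.
move=> v0 /existsNP [x] /existsNP [y] /not_implyP [hxy nxy].
have y0 : y != 0.
  apply/eqP => y0; apply: nxy; split => //; move: hxy; rewrite y0 scale0r addr0.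
  by move/eqP; rewrite scaler_eq0 (negPf v0) orbF => /eqP.
exists (- (x / y)); apply/rowP => j; have := entry_eq hxy j; rewrite !mxE => h.
apply: (mulfI y0).
have -> : y * (- (x / y) * v 0 j) = - (x * v 0 j) by field.
lra.
Qed.

Lemma orbit_neq0 (R : realType) n (phi : R -> 'M[R]_n) (u : 'rV[R]_n) t :
  one_param_lift phi -> u != 0 -> u *m phi t != 0.
Proof.
move=> [_ [phi0 [phiD _]]] u0; apply/eqP => h; move/eqP: u0; apply.
by rewrite -[u]mulmx1 -phi0 -(subrr t) phiD mulmxA h mul0mx.
Qed.

Lemma lin_prop (R : realType) (al be a b : R) :
  al * b - be * a = 0 -> ~ (a = 0 /\ b = 0) -> exists c, al = c * a /\ be = c * b.
Proof.
move=> h nab; have [a0|a0] := eqVneq a 0.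
  have b0 : b != 0 by apply/eqP => b0; apply: nab.
  exists (be / b); split; last by rewrite divfK.
  apply: (mulIf b0); rewrite a0 mulr0 mul0r; move: h; rewrite a0 mulr0 subr0 //.
exists (al / a); split; first by rewrite divfK.
apply: (mulIf a0); rewrite mulrAC divfK //; lra.
Qed.

Lemma scalar_of_all (R : realType) n (u : 'rV[R]_n) (M : 'M[R]_n) :
  (forall x : 'rV[R]_n, exists c, x = c *: u) -> exists l, M = l%:M.
Proof.
move=> H; have [l hl] : exists l, u *m M = l *: u.
  by have [c hc] := H (u *m M); exists c.
exists l; apply/row_matrixP => i; rewrite !rowE mul_mx_scalar.
have [c ->] := H (delta_mx 0 i).
by rewrite -scalemxAl hl scalerA mulrC -scalerA.
Qed.
Unset Implicit Arguments.

Theorem lemma1p2 (R : realType) (n : nat) (phi : R -> 'M[R]_n)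
    (U : set 'rV[R]_n) :
  one_param_lift phi ->
  (exists t, ~ proj_trivial (phi t)) ->
  projsp_open U -> U !=set0 ->
  (forall v, U v -> orbit_in_proper_line phi v) ->
  linear_flow phi.
Proof.
move=> Hphi [tn Hnt] [oU [Unz _]] [w0 Uw0] Horb.
have [cphi [phi0 [phiD _]]] := Hphi.
have S1 : forall t1 t u, (\rank (X3 u (phi t1) (phi t)) < 3)%N.
  move=> t1 t; apply: (step1 oU Uw0) => w Uw.
  have [L [rL [hL _]]] := Horb w Uw.
  apply: (X3_L rL) => //.
  by have := hL 0; rewrite phi0 mulmx1.
have goodU : forall t1, ~ proj_trivial (phi t1) ->
    exists2 v, U v & indep2 v (v *m phi t1).
  move=> t1 hB; apply/not_exists2P => hn; apply: hB.
  apply: (not_all_eigen oU Uw0 (Unz _ Uw0)) => v Uv.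
  apply: dep_eigen; first exact: Unz.
  by move=> hi; have [] := hn v.
have key1 : forall t1 v p q (al be : R -> R), U v -> indep2 v (v *m phi t1) ->
    char2 p q t1 al be -> (forall t, v *m phi t = al t *: v + be t *: (v *m phi t1)) ->
    0 <= p ^+ 2 + 4 * q.
  move=> t1 v p q al be Uv Hv Hc hc.
  rewrite leNgt; apply/negP => hd.
  have [L [rL [hL [w [w0n [wL hw]]]]]] := Horb v Uv.
  have vL : (v <= L)%MS by have := hL 0; rewrite phi0 mulmx1.
  have [a [b hab]] := span2 Hv vL (hL t1) (eq_leq rL) wL.
  have nab : ~ (a = 0 /\ b = 0).
    by move=> [a0 b0]; move: w0n; rewrite hab a0 b0 !scale0r addr0 eqxx.
  have [t ht] := char2_i Hc hd a b.
  have [c [hca hcb]] := lin_prop ht nab.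
  move/eqP: (hw t c); apply.
  by rewrite hc hca hcb hab scalerDr !scalerA.
have key2 : forall t1 u p q (al be : R -> R), ~ proj_trivial (phi t1) ->
    indep2 u (u *m phi t1) -> char2 p q t1 al be ->
    u *m phi t1 *m phi t1 = q *: u + p *: (u *m phi t1) ->
    0 <= p ^+ 2 + 4 * q.
  move=> t1 u p q al be hB Hu Hc hBB.
  rewrite leNgt; apply/negP => hd.
  have [v Uv Hv] := goodU t1 hB.
  have [p' [q' [al' [be' [Hc' hc' hBB']]]]] := build_char2 Hphi Hv (fun t => S1 t1 t v).
  have := key1 t1 v p' q' al' be' Uv Hv Hc' hc'.
  suff [e1 e2] : p = p' /\ q = q' by rewrite -e1 -e2 leNgt hd.
  apply: (linking Hu Hv hBB hBB' hd).
  set w := u + v.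
  case: (pselect (indep2 w (w *m phi t1))) => Hw.
    have [a [b hab]] := span_X3 (S1 t1 (t1 + t1) w) Hw.
    exists a, b, (-1); split; first by move=> [_ [_ /eqP]]; rewrite oppr_eq0 oner_eq0.
    by rewrite -mulmxA -phiD hab scaleN1r subrr.
  have [w00|w0n] := eqVneq w 0.
    exists 1, 0, 0; split; first by move=> [h _]; move: h => /eqP; rewrite oner_eq0.
    by rewrite w00 !mul0mx !scaler0 !addr0.
  move: Hw => /existsNP [x] /existsNP [y] /not_implyP [hxy nxy].
  exists x, y, 0; split; first by move=> [hx [hy _]]; apply: nxy.
  by rewrite scale0r addr0.
split.
- move=> t0 [c hc].
  have [v Uv Hv] := goodU tn Hnt.
  have [p [q [al [be [Hc hcv _]]]]] := build_char2 Hphi Hv (fun t => S1 tn t v).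
  have hd := key1 tn v p q al be Uv Hv Hc hcv.
  have [_ inj] := char2_ii Hc hd.
  apply: inj.
  have : al t0 *: v + be t0 *: (v *m phi tn) = c *: v + 0 *: (v *m phi tn).
    by rewrite -hcv hc mul_mx_scalar scale0r addr0.
  by move/(lc_uniq Hv) => [].
move=> u u0.
case: (pselect (exists t1, indep2 u (u *m phi t1))) => [[t1 Hu]|hnone].
  have hB : ~ proj_trivial (phi t1).
    move=> [c hc]; have [] := Hu c (-1).
      by rewrite hc mul_mx_scalar scaleN1r subrr.
    by move=> _ /eqP; rewrite oppr_eq0 oner_eq0.
  have [p [q [al [be [Hc hc hBB]]]]] := build_char2 Hphi Hu (fun t => S1 t1 t u).
  have hd := key2 t1 u p q al be hB Hu Hc hBB.
  have [pos _] := char2_ii Hc hd.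
  exists (<<col_mx u (u *m phi t1)>>%MS); split.
    by rewrite mxrank_gen indep2_rank.
  split.
    by move=> t; rewrite genmxE hc lc_sub.
  exists ((- p) *: u + 2 *: (u *m phi t1)); split.
    apply/eqP => h; have [] := Hu (- p) 2 h.
    by move=> _ /eqP; rewrite pnatr_eq0.
  split; first by rewrite genmxE lc_sub.
  move=> t c; apply/eqP => h.
  have : al t *: u + be t *: (u *m phi t1) = (c * - p) *: u + (c * 2) *: (u *m phi t1).
    by rewrite -hc h scalerDr !scalerA.
  move/(lc_uniq Hu) => [ha hb].
  have := pos t; rewrite ha hb; lra.
have hall : forall t, exists l, u *m phi t = l *: u.
  move=> t; apply: dep_eigen => // hi; apply: hnone; by exists t.
have [e He] : exists e, indep2 u e.
  apply/not_existsP => hn; apply: Hnt.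
  apply: (@scalar_of_all _ _ u) => x.
  have [l hl] := dep_eigen u0 (hn x); by exists l.
exists (<<col_mx u e>>%MS); split.
  by rewrite mxrank_gen indep2_rank.
split.
  move=> t; have [l ->] := hall t; rewrite genmxE.
  by apply: scalemx_sub; apply: col2_subl.
have [_ e0] := indep2_neq0 He.
exists e; split => //; split; first by rewrite genmxE col2_subr.
move=> t c; apply/eqP => h.
have [l hl] := hall t.
have [l0 _] : l = 0 /\ - c = 0 by apply: He; rewrite scaleNr -hl h subrr.
by move: (orbit_neq0 t Hphi u0); rewrite hl l0 scale0r eqxx.
Qed.
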